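(* Let $H$ be a graph. Then there is a full lc-sequence for $H$ if and only if each loopless connected component of $H$ consists of a single isolated vertex.
   Context: Graphs are finite, may have loops, but no multiple edges; an edge is either $\{u\}$ (a loop at $u$) or $\{u,w\}$ with $u\ne w$. A vertex is isolated if no edge (including a loop) is incident to it. A graph is loopless if no vertex is looped. For $v\in V(H)$, $N_H(v)=\{u\in V(H): u\neq v,\ \{u,v\}\in E(H)\}$. For a looped vertex $v$, the local complement $H*v$ is the graph on $V(H)$ such that for every $p\subseteq V(H)$ with $|p|\in\{1,2\}$: $p\in E(H*v)$ iff either ($p\notin E(H)$ and $p\subseteq N_H(v)$) or ($p\in E(H)$ and $p\not\subseteq N_H(v)$). $H*_c v$ (defined only when $v$ is looped) is obtained from $H*v$ by removing all edges incident to $v$, including its loop. For mutually distinct vertices $v_1,\dots,v_k$, the sequence $\varphi=*_c v_1 *_c v_2\cdots *_c v_k$ (applied left to right) is an lc-sequence for $H$ if each operation is applicable, i.e. $v_i$ is looped in $H*_c v_1\cdots *_c v_{i-1}$ for all $i$. It is full if the resulting graph $H\varphi$ consists only of isolated vertices. *)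

(* Defs.v *)
From mathcomp Require Import all_boot.
Set Implicit Arguments. Unset Strict Implicit. Unset Printing Implicit Defensive.

(* A graph on the finite vertex type V (loops allowed, no multiple edges) is
   represented by its adjacency relation H : rel V, required to be symmetric:
   H u w (u <> w) means the edge {u,w} is present, H u u means u is looped. *)
Definition graph_sym (V : finType) (H : rel V) : Prop := forall u w, H u w = H w u.

Definition looped (V : finType) (H : rel V) (v : V) : bool := H v v.

Definition isolated (V : finType) (H : rel V) (v : V) : bool := [forall u, ~~ H v u].

Definition nbhd (V : finType) (H : rel V) (v : V) : pred V :=
  fun u => (u != v) && H u v.

(* local complement H * v : the pair p = {u,w} (|p| in {1,2}) is an edge of
   H * v iff exactly one of "p in E(H)" and "p subset N_H(v)" holds. *)
Definition lc (V : finType) (H : rel V) (v : V) : rel V :=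
  fun u w => xorb (H u w) (nbhd H v u && nbhd H v w).

Definition lcc (V : finType) (H : rel V) (v : V) : rel V :=
  fun u w => [&& u != v, w != v & lc H v u w].

Definition apply_seq (V : finType) (H : rel V) (s : seq V) : rel V :=
  foldl (@lcc V) H s.

Fixpoint applicable (V : finType) (H : rel V) (s : seq V) : bool :=
  match s with
  | [::] => true
  | v :: s' => looped H v && applicable (lcc H v) s'
  end.

Definition lc_sequence (V : finType) (H : rel V) (s : seq V) : bool :=
  uniq s && applicable H s.

Definition full_lc_sequence (V : finType) (H : rel V) (s : seq V) : bool :=
  lc_sequence H s && [forall u, isolated (apply_seq H s) u].

Definition component (V : finType) (H : rel V) (v : V) : pred V := connect H v.

Definition loopless_component (V : finType) (H : rel V) (v : V) : Prop :=
  forall u, component H v u -> ~~ looped H u.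

(* Main.v *)
Require Import Defs.
From mathcomp Require Import all_boot.
Set Implicit Arguments. Unset Strict Implicit. Unset Printing Implicit Defensive.

Section S.
Variable V : finType.
Implicit Types (G : rel V).

Lemma iso_lcc G v x : isolated G x -> isolated (lcc G v) x.
Proof.
move=> /forallP Hx; apply/forallP=> u.
rewrite /lcc /lc /nbhd (negbTE (Hx u)) (negbTE (Hx v)) /=.
by case: (x != v); case: (u != v).
Qed.

Lemma lcc_w_iso G w : isolated (lcc G w) w.
Proof. by apply/forallP => u; rewrite /lcc eqxx. Qed.

Lemma applicable_notin s : forall G x, applicable G s -> x \in s -> ~~ isolated G x.
Proof.
elim: s => [|a s IH] G x //= /andP[Ha Hs]; rewrite in_cons => /orP[/eqP->|Hx].
  by apply/negP => /forallP /(_ a); rewrite /looped in Ha; rewrite Ha.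
apply/negP => Hi; have := IH _ _ Hs Hx; by rewrite iso_lcc.
Qed.

Lemma sym_lcc G w : graph_sym G -> graph_sym (lcc G w).
Proof.
move=> Hs u z; rewrite /lcc /lc (Hs u z) [nbhd G w u && _]andbC.
by case: (u != w); case: (z != w).
Qed.

Lemma first_step G a b : connect G a b -> a != b -> exists y, G a y.
Proof.
move=> /connectP[[|y p] /= Hp ->]; first by rewrite eqxx.
by move/andP: Hp => [Hy _] _; exists y.
Qed.

Lemma fwd_inv (H : rel V) v (Hll : forall u, connect H v u -> ~~ H u u) :
  forall s G, (forall x y, connect H v x -> G x y = H x y) -> applicable G s ->
  forall x y, connect H v x -> apply_seq G s x y = H x y.
Proof.
elim=> [|w s IH] G HG //= /andP[Hw Hs]; apply: IH Hs => x y Cx.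
rewrite /looped in Hw.
have Cw : ~~ connect H v w.
  by apply/negP=> Cw; have := Hll _ Cw; rewrite -HG // Hw.
have Hxw : H x w = false.
  by apply/negbTE/negP => Hxw; move/negP: Cw; apply; apply: connect_trans Cx (connect1 Hxw).
have xw : x != w by apply/eqP => Exw; rewrite -Exw Cx in Cw.
rewrite /lcc /lc /nbhd xw (HG x y Cx) (HG x w Cx) Hxw /=.
case: eqP => [->|_] /=; first by rewrite Hxw.
by case: (H x y).
Qed.

Lemma negbT_eqsym (a b : V) : a != b -> b != a.
Proof. by rewrite eq_sym. Qed.

Definition score G x : nat :=
  \sum_(y : V) (if G x y then (if G y y then 0 else 2) else 1).

Lemma score_lt G w x y0 : graph_sym G -> G w w -> x != w -> G x w -> G x x ->
  (forall y, lcc G w x y -> ~~ lcc G w y y) -> lcc G w x y0 ->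
  score G w < score G x.
Proof.
move=> Hs Gww xw Gxw Gxx Hc Hy0.
have term : forall y,
    ((if G w y then (if G y y then 0 else 2) else 1) <=
     (if G x y then (if G y y then 0 else 2) else 1)) /\
    (lcc G w x y -> (if G w y then (if G y y then 0 else 2) else 1) <
     (if G x y then (if G y y then 0 else 2) else 1)).
  move=> y; case: (eqVneq y w) => [->|yw].
    by rewrite /lcc eqxx andbF Gww.
  case: (eqVneq y x) => [->|yx].
    by rewrite (Hs w x) Gxw Gxx /lcc /lc /nbhd xw Gxw Gxx.
  have := Hc y; rewrite /lcc /lc /nbhd xw yw Gxw (Hs y w) /=.
  by case: (G x y); case: (G w y); case: (G y y) => //= Hc'; (try by have := Hc' isT); split.
rewrite /score (bigD1 y0) //= [X in _ < X](bigD1 y0) //=.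
rewrite -addSn; apply: leq_add; first exact: (term y0).2.
by apply: leq_sum => y _; exact: (term y).1.
Qed.

Definition Cond G := forall v, (forall u, connect G v u -> ~~ G u u) -> isolated G v.

Lemma good_pivot G w : graph_sym G -> Cond G -> G w w ->
  (forall j, G j j -> score G j <= score G w) -> Cond (lcc G w).
Proof.
move=> Hs HC Hw Hmax v Hll; apply/forallP => u; apply/negP => Hvu.
have HsW := sym_lcc w Hs.
have CS : connect_sym (lcc G w) := sym_connect_sym HsW.
have vw : v != w by move: Hvu; rewrite /lcc => /and3P[].
case: (boolP [exists x, connect (lcc G w) v x && nbhd G w x]).
  case/existsP => x /andP [Cvx /andP[xw Gxw]].
  have Gxx : G x x.
    by have := Hll x Cvx; rewrite /lcc /lc /nbhd xw Gxw /=; case: (G x x).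
  have [y Gwxy] : exists y, lcc G w x y.
    case: (eqVneq x v) => [->|xv]; first by exists u.
    by apply: (@first_step _ x v) => //; rewrite CS.
  have Hc : forall y, lcc G w x y -> ~~ lcc G w y y.
    by move=> y' H'; apply: Hll; apply: connect_trans Cvx (connect1 H').
  have H2 := score_lt Hs Hw xw Gxw Gxx Hc Gwxy.
  have H1 := Hmax x Gxx.
  by rewrite leqNgt H2 in H1.
rewrite negb_exists => /forallP Hno.
have Hnot : forall a, connect (lcc G w) v a -> (a != w) && ~~ G a w.
  move=> a Ca.
  have aw : a != w.
    apply/negP => /eqP Eaw; subst a.
    have Cwv : connect (lcc G w) w v by rewrite CS.
    have [y] := first_step Cwv (negbT_eqsym vw).
    by rewrite /lcc eqxx.
  by have := Hno a; rewrite Ca /nbhd aw /=.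
have Hcl : forall p a, connect (lcc G w) v a -> path G a p ->
    connect (lcc G w) v (last a p).
  elim => [|b p IH] a Ca //= /andP[Gab Hp]; apply: IH Hp.
  have /andP[aw Gaw] := Hnot a Ca.
  have bw : b != w by apply/eqP => Ebw; rewrite -Ebw Gab in Gaw.
  apply: connect_trans Ca (connect1 _).
  by rewrite /lcc /lc /nbhd aw bw /= (negbTE Gaw) /= Gab.
have HGll : forall z, connect G v z -> ~~ G z z.
  move=> z /connectP [p Hp ->].
  have Cz := Hcl p v (connect0 _ _) Hp.
  have /andP[zw Gzw] := Hnot _ Cz.
  by have := Hll _ Cz; rewrite /lcc /lc /nbhd zw (negbTE Gzw) /=; case: (G _ _).
have /andP[_ Gvw] := Hnot v (connect0 _ _).
have := HC v HGll => /forallP /(_ u).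
move: Hvu; rewrite /lcc /lc /nbhd vw (negbTE Gvw) /=.
by case/andP => _; case: (G v u).
Qed.

Definition NI G := [set v | ~~ isolated G v].

Lemma back_step G : graph_sym G -> Cond G ->
  (forall G', graph_sym G' -> Cond G' -> #|NI G'| < #|NI G| ->
     exists s, full_lc_sequence G' s) ->
  exists s, full_lc_sequence G s.
Proof.
move=> Hs HC IH.
case: (boolP [exists w, G w w]) => [/existsP[w0 Hw0] | Hno]; last first.
  exists [::]; rewrite /full_lc_sequence /lc_sequence /=.
  apply/forallP => v; apply: HC => u _.
  by move: Hno; rewrite negb_exists => /forallP.
case: (@arg_maxnP _ w0 (fun w => G w w) (score G)) => // w Hw Hmax.
have HC' := good_pivot Hs HC Hw Hmax.
have Hs' := sym_lcc w Hs.
have Hlt : #|NI (lcc G w)| < #|NI G|.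
  apply: proper_card; apply/properP; split.
    apply/subsetP => x; rewrite !inE; apply: contra; exact: iso_lcc.
  exists w; rewrite !inE; last by rewrite negbK lcc_w_iso.
  by apply/negP => /forallP /(_ w); rewrite Hw.
have [s Hfull] := IH _ Hs' HC' Hlt.
exists (w :: s).
move: Hfull; rewrite /full_lc_sequence /lc_sequence /= => /andP[/andP[Hu Ha] Hi].
rewrite Hu Ha Hi /looped Hw /= andbT.
by rewrite !andbT; apply/negP => ws; have := applicable_notin Ha ws; rewrite lcc_w_iso.
Qed.

Lemma back n : forall G, graph_sym G -> Cond G -> #|NI G| <= n ->
  exists s, full_lc_sequence G s.
Proof.
elim: n => [|n IH] G Hs HC Hn; apply: back_step => // G' Hs' HC' Hlt.
  by have := leq_trans Hlt Hn.
by apply: IH => //; rewrite -ltnS; exact: leq_trans Hlt Hn.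
Qed.

End S.

Theorem mainTheorem6 (V : finType) (H : rel V) (Hsym : graph_sym H) :
  (exists s : seq V, full_lc_sequence H s) <->
  (forall v : V, loopless_component H v ->
     (forall u, component H v u -> u = v) /\ isolated H v).
Proof.
split.
  move=> [s /andP[/andP[_ Happ] /forallP Hiso]] v Hll.
  have Hll' : forall u, connect H v u -> ~~ H u u := Hll.
  have Heq := @fwd_inv V H v Hll' s H (fun _ _ _ => erefl) Happ.
  have HisoH : isolated H v.
    apply/forallP => u; rewrite -(Heq v u (connect0 _ _)).
    exact: (forallP (Hiso v) u).
  split => // u /connectP [[|y p] /= Hp ->] //.
  by move/andP: Hp => [Hvy _]; move/forallP: HisoH => /(_ y); rewrite Hvy.
move=> HR; apply: (@back V #|NI H|) => // v Hll.
exact: (HR v Hll).2.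
Qed.
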